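(* Let $n\ge3$, $\kappa=\kappa_{12}\mathbf e_1\wedge\mathbf e_2$, so that the gyroscopic form is $\mathbf f=\frac{\kappa_{12}}{\varepsilon^2}d\gamma_1\wedge d\gamma_2$, and let the modified inertia operator be $\mathbf I(X\wedge Y)=\mathbb AX\wedge\mathbb AY$ with $\mathbb A=\operatorname{diag}(a_1,a_2,a_3,\dots,a_3)$, $a_i>0$. Let $\mathcal A(\gamma)=a_3+(a_1-a_3)\gamma_1^2+(a_2-a_3)\gamma_2^2$. Then $\mathcal N(\gamma)=\varepsilon\mathcal A(\gamma)^{\frac1{2\varepsilon}-1}$ is a Chaplygin multiplier: under the time substitution $d\tau=\mathcal N(\gamma)dt$ and the change of momenta $\tilde p=\mathcal N(\gamma)p$, the reduced system $$\dot\gamma=X_\gamma(\gamma,p),\qquad \dot p=\frac{1-\varepsilon}{\varepsilon^3}\mathbf I(\gamma\wedge X_\gamma)X_\gamma+\frac1{\varepsilon^2}\kappa X_\gamma+\mu\gamma$$ on $T^*S^{n-1}$ becomes the magnetic geodesic flow of the metric $$ds^2_{\mathbb A,\varepsilon}=(\gamma,\mathbb A\gamma)^{\frac1\varepsilon-2}\big((\mathbb Ad\gamma,d\gamma)(\mathbb A\gamma,\gamma)-(\mathbb A\gamma,d\gamma)^2\big)$$ on $S^{n-1}$ (Hamiltonian $h^*(\gamma,\tilde p)=\frac12\mathcal A(\gamma)^{1-\frac1\varepsilon}\langle\tilde p,\mathbb A^{-1}\tilde p\rangle$) with respect to the twisted symplectic form $$\Big(d\tilde p_1\wedge d\gamma_1+\dots+d\tilde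 p_n\wedge d\gamma_n+\frac{\kappa_{12}}{\varepsilon}\mathcal A(\gamma)^{\frac1{2\varepsilon}-1}d\gamma_1\wedge d\gamma_2\Big)\Big|_{T^*S^{n-1}}.$$
   Context: Model: balanced $n$-dimensional ball with gyroscope rolling without slipping and twisting over a fixed sphere; $\varepsilon=b/(b+a)$ or $b/(b-a)$ with $a,b>0$ the radii of the ball and the sphere. On $so(n)$, $\langle X,Y\rangle=-\frac12\operatorname{tr}(XY)$; on $\mathbb R^n$ the Euclidean product (also written $(\cdot,\cdot)$); $x\wedge y=xy^T-yx^T$; $\mathbf e_1,\dots,\mathbf e_n$ is the standard basis. $\mathbf I=\mathbb I+ma^2\mathrm{Id}$ is the modified inertia operator. $T^*S^{n-1}=\{(\gamma,p)\in\mathbb R^{2n}:\langle\gamma,\gamma\rangle=1,\langle\gamma,p\rangle=0\}$; $X_\gamma(\gamma,p)$ is the inverse of the Legendre map $\dot\gamma\mapsto p=-\frac1{\varepsilon^2}\mathbf I(\gamma\wedge\dot\gamma)\gamma$ on $TS^{n-1}$, $h=\frac12\langle X_\gamma,p\rangle$, and $\mu=\frac{\varepsilon-1}{\varepsilon^3}\langle\mathbf I(\gamma\wedge X_\gamma)X_\gamma,\gamma\rangle-2h+\frac1{\varepsilon^2}\langle X_\gamma,\kappa\gamma\rangle$. (Note $\mathcal A(\gamma)=\langle\mathbb A\gamma,\gamma\rangle$ on the unit sphere.) *)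

(* Defs.v *)
From HB Require Import structures.
From mathcomp Require Import all_boot all_order all_algebra.
From mathcomp Require Import all_classical all_reals all_analysis.
Set Implicit Arguments. Unset Strict Implicit. Unset Printing Implicit Defensive.
Import Order.TTheory GRing.Theory Num.Theory.
Import numFieldNormedType.Exports.
Local Open Scope ring_scope.
Local Open Scope classical_set_scope.

Section Defs.
Variable R : realType.
Variable n : nat.
Local Notation vec := 'cV[R]_n.

Definition dot (x y : vec) : R := \sum_(i < n) x i 0 * y i 0.

Definition wedge (x y : vec) : 'M[R]_n := x *m y^T - y *m x^T.

(* standard basis vector e_{k+1} (0-based index k). *)
Definition ebasis (k : nat) : vec := \col_(i < n) (if (i : nat) == k then 1 else 0).

Definition coord (x : vec) (k : nat) : R := dot x (ebasis k).

Definition diagA (a1 a2 a3 : R) : 'M[R]_n :=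
  \matrix_(i < n, j < n)
    (if i == j then (if (i : nat) == 0%N then a1 else if (i : nat) == 1%N then a2 else a3)
     else 0).

Definition Iw (A : 'M[R]_n) (x y : vec) : 'M[R]_n := wedge (A *m x) (A *m y).

Definition kappa (k12 : R) : 'M[R]_n := k12 *: wedge (ebasis 0) (ebasis 1).

Definition legendre (A : 'M[R]_n) (eps : R) (g v : vec) : vec :=
  - (eps ^+ 2)^-1 *: (Iw A g v *m g).

(* X_gamma(gamma, p): the inverse of the Legendre map on T S^{n-1}, i.e. the
   tangent vector v (with (gamma, v) = 0) mapped to p. *)
Definition Xg (A : 'M[R]_n) (eps : R) (g p : vec) : vec :=
  xget 0 [set v | dot g v = 0 /\ legendre A eps g v = p].

Definition hred (A : 'M[R]_n) (eps : R) (g p : vec) : R :=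
  2^-1 * dot (Xg A eps g p) p.

Definition mu (A : 'M[R]_n) (eps k12 : R) (g p : vec) : R :=
  let X := Xg A eps g p in
  (eps - 1) / eps ^+ 3 * dot (Iw A g X *m X) g - 2 * hred A eps g p
  + (eps ^+ 2)^-1 * dot X (kappa k12 *m g).

Definition pdot_red (A : 'M[R]_n) (eps k12 : R) (g p : vec) : vec :=
  let X := Xg A eps g p in
  ((1 - eps) / eps ^+ 3) *: (Iw A g X *m X) + (eps ^+ 2)^-1 *: (kappa k12 *m X)
  + mu A eps k12 g p *: g.

Definition TSn (g p : vec) : Prop := dot g g = 1 /\ dot g p = 0.

Definition tangentTS (g p : vec) (W : vec * vec) : Prop :=
  dot g W.1 = 0 /\ dot W.1 p + dot g W.2 = 0.

Definition calA (a1 a2 a3 : R) (g : vec) : R :=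
  a3 + (a1 - a3) * coord g 0 ^+ 2 + (a2 - a3) * coord g 1 ^+ 2.

Definition Nmult (a1 a2 a3 eps : R) (g : vec) : R :=
  eps * powR (calA a1 a2 a3 g) ((2 * eps)^-1 - 1).

Definition hstar (a1 a2 a3 eps : R) (x : vec * vec) : R :=
  2^-1 * powR (calA a1 a2 a3 x.1) (1 - eps^-1)
  * dot x.2 (invmx (diagA a1 a2 a3) *m x.2).

(* the twisted symplectic form
   sum_i dpt_i /\ dgamma_i + (k12/eps) calA^(1/(2eps)-1) dgamma_1 /\ dgamma_2
   at the point with position g, evaluated on V, W in R^{2n} = (dgamma, dpt). *)
Definition omega_tw (a1 a2 a3 eps k12 : R) (g : vec) (V W : vec * vec) : R :=
  (dot V.2 W.1 - dot V.1 W.2)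
  + k12 / eps * powR (calA a1 a2 a3 g) ((2 * eps)^-1 - 1)
    * (coord V.1 0 * coord W.1 1 - coord V.1 1 * coord W.1 0).

Definition is_hamVF (om : vec * vec -> vec * vec -> R) (H : vec * vec -> R)
  (x : vec * vec) (V : vec * vec) : Prop :=
  tangentTS x.1 x.2 V /\
  forall W, tangentTS x.1 x.2 W -> om V W = - ('D_W H x).

Definition metricAe (A : 'M[R]_n) (eps : R) (g v w : vec) : R :=
  powR (dot g (A *m g)) (eps^-1 - 2)
  * (dot (A *m v) w * dot (A *m g) g - dot (A *m g) v * dot (A *m g) w).

End Defs.

(* Main.v *)
Require Import Defs.
From HB Require Import structures.
From mathcomp Require Import all_boot all_order all_algebra.
From mathcomp Require Import all_classical all_reals all_analysis.
From mathcomp Require Import ring lra.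
Set Implicit Arguments. Unset Strict Implicit. Unset Printing Implicit Defensive.
Import Order.TTheory GRing.Theory Num.Theory.
Import numFieldNormedType.Exports.
Local Open Scope ring_scope.
Local Open Scope classical_set_scope.
Section Lin.
Variable R : realType.
Variable n : nat.
Local Notation vec := 'cV[R]_n.
Implicit Types x y z : vec.
Local Notation coord := (@Defs.coord R n).

Lemma dotC x y : dot x y = dot y x.
Proof. by rewrite /dot; apply: eq_bigr => i _; rewrite mulrC. Qed.
Lemma dotDl x y z : dot (x + y) z = dot x z + dot y z.
Proof. by rewrite /dot -big_split; apply: eq_bigr => i _; rewrite !mxE mulrDl. Qed.
Lemma dotDr x y z : dot z (x + y) = dot z x + dot z y.
Proof. by rewrite dotC dotDl !(dotC z). Qed.
Lemma dotZl (k : R) x y : dot (k *: x) y = k * dot x y.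
Proof. by rewrite /dot mulr_sumr; apply: eq_bigr => i _; rewrite !mxE mulrA. Qed.
Lemma dotZr (k : R) x y : dot y (k *: x) = k * dot y x.
Proof. by rewrite dotC dotZl dotC. Qed.
Lemma dotNl x y : dot (- x) y = - dot x y.
Proof. by rewrite -scaleN1r dotZl mulN1r. Qed.
Lemma dotNr x y : dot y (- x) = - dot y x.
Proof. by rewrite dotC dotNl dotC. Qed.
Lemma dotBl x y z : dot (x - y) z = dot x z - dot y z.
Proof. by rewrite dotDl dotNl. Qed.
Lemma dotBr x y z : dot z (x - y) = dot z x - dot z y.
Proof. by rewrite dotDr dotNr. Qed.
Lemma dot0l x : dot 0 x = 0.
Proof. by rewrite /dot big1 // => i _; rewrite mxE mul0r. Qed.
Lemma dot0r x : dot x 0 = 0.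
Proof. by rewrite dotC dot0l. Qed.

Lemma dot_mulmx (M : 'M[R]_n) x y : dot (M *m x) y = dot x (M^T *m y).
Proof.
rewrite /dot.
under eq_bigr do rewrite mxE mulr_suml.
under [RHS]eq_bigr do rewrite mxE mulr_sumr.
rewrite exchange_big /=; apply: eq_bigr => i _; apply: eq_bigr => j _.
by rewrite mxE; ring.
Qed.

Lemma trmx_mul_dot x y : y^T *m x = (dot y x)%:M.
Proof.
apply/matrixP => i j; rewrite !ord1 !mxE /dot /=.
by apply: eq_bigr => k _; rewrite mxE.
Qed.

Lemma wedge_mul x y z : wedge x y *m z = dot y z *: x - dot x z *: y.
Proof.
by rewrite /wedge mulmxBl -!mulmxA !trmx_mul_dot !mul_mx_scalar.
Qed.

Lemma ebasisE (k : nat) (i : 'I_n) : ebasis R n k i 0 = if (i : nat) == k then 1 else 0.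
Proof. by rewrite mxE. Qed.

Lemma coord_mul x (k : nat) (i : 'I_n) :
  coord x k * ebasis R n k i 0 = if (i : nat) == k then x i 0 else 0.
Proof.
rewrite /coord /dot ebasisE; case: eqP => [ik|_]; last by rewrite mulr0.
rewrite mulr1 (bigD1 i) //= big1 ?addr0; first by rewrite mxE ik eqxx mulr1.
move=> j /negbTE ji; rewrite mxE; case: eqP => [jk|]; last by rewrite mulr0.
have ji' : j = i by apply: val_inj; rewrite /= jk ik.
by move: ji; rewrite ji' eqxx.
Qed.

Lemma coordE x (k : nat) (i : 'I_n) : (i : nat) = k -> coord x k = x i 0.
Proof. by move=> ik; have := coord_mul x k i; rewrite ebasisE ik eqxx mulr1. Qed.

Lemma coordD x y k : coord (x + y) k = coord x k + coord y k.
Proof. exact: dotDl. Qed.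
Lemma coordZ (c : R) x k : coord (c *: x) k = c * coord x k.
Proof. exact: dotZl. Qed.

Lemma dot_ebasis x k : dot (ebasis R n k) x = coord x k.
Proof. by rewrite dotC. Qed.

Definition dg (a1 a2 a3 : R) (i : 'I_n) : R :=
  if (i : nat) == 0%N then a1 else if (i : nat) == 1%N then a2 else a3.

Lemma diagA_mulE (a1 a2 a3 : R) x i : (diagA n a1 a2 a3 *m x) i 0 = dg a1 a2 a3 i * x i 0.
Proof.
rewrite mxE (bigD1 i) //= big1 ?addr0; first by rewrite mxE eqxx.
by move=> j /negbTE ji; rewrite mxE eq_sym ji mul0r.
Qed.

Lemma diagA_mul (a1 a2 a3 : R) x :
  diagA n a1 a2 a3 *m x = a3 *: x + ((a1 - a3) * coord x 0) *: ebasis R n 0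
                          + ((a2 - a3) * coord x 1) *: ebasis R n 1.
Proof.
apply/matrixP => i j; rewrite !ord1 diagA_mulE !mxE -!mulrA.
rewrite -!(ebasisE 0) -(ebasisE 1) !coord_mul /dg.
case: eqP => [-> /=|_]; first ring.
by case: eqP => _; ring.
Qed.

Lemma diagA_tr (a1 a2 a3 : R) : (diagA n a1 a2 a3)^T = diagA n a1 a2 a3.
Proof.
apply/matrixP => i j; rewrite !mxE eq_sym; case: eqP => // ->; done.
Qed.

Lemma diagA_mulmx (a1 a2 a3 b1 b2 b3 : R) :
  diagA n a1 a2 a3 *m diagA n b1 b2 b3 = diagA n (a1 * b1) (a2 * b2) (a3 * b3).
Proof.
apply/matrixP => i j; rewrite !mxE (bigD1 i) //= big1 ?addr0.
  rewrite /diagA !mxE eqxx; case: (i == j); last by rewrite mulr0.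
  by case: ifP => _ //; case: ifP.
by move=> k /negbTE ki; rewrite /diagA mxE eq_sym ki mul0r.
Qed.

Lemma diagA1 : diagA (R:=R) n 1 1 1 = 1%:M.
Proof.
apply/matrixP => i j; rewrite !mxE; case: eqP => _ //.
by case: ifP => _ //; case: ifP.
Qed.

Lemma invmx_diagA (a1 a2 a3 : R) : a1 != 0 -> a2 != 0 -> a3 != 0 ->
  invmx (diagA n a1 a2 a3) = diagA n a1^-1 a2^-1 a3^-1.
Proof.
move=> h1 h2 h3.
have E : diagA n a1 a2 a3 *m diagA n a1^-1 a2^-1 a3^-1 = 1%:M.
  by rewrite diagA_mulmx !divff // diagA1.
have [U _] := mulmx1_unit E.
by rewrite -[RHS](mulKmx U) E mulmx1.
Qed.

End Lin.
Section Calc.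
Variable R : realType.
Implicit Types f g : R -> R.

Lemma isdD f g x df dg : is_derive x (1:R) f df -> is_derive x (1:R) g dg ->
  is_derive x (1:R) (fun y => f y + g y) (df + dg).
Proof. by move=> ? ?; exact: is_deriveD. Qed.

Lemma isdM f g x df dg : is_derive x (1:R) f df -> is_derive x (1:R) g dg ->
  is_derive x (1:R) (fun y => f y * g y) (f x * dg + g x * df).
Proof. by move=> ? ?; exact: is_deriveM. Qed.

Lemma isdX f x df : is_derive x (1:R) f df ->
  is_derive x (1:R) (fun y => f y ^+ 2) (2 * f x * df).
Proof.
move=> H; have H2 := isdM H H.
have -> : 2 * f x * df = f x * df + f x * df by ring.
exact: H2.
Qed.

Lemma isdC x (c : R) : is_derive x (1:R) (fun _ => c) 0.
Proof. exact: is_derive_cst. Qed.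

Lemma isdId x : is_derive x (1:R) (fun y => y) 1.
Proof. exact: is_derive_id. Qed.

Lemma isdE f x df df' : is_derive x (1:R) f df -> df = df' -> is_derive x (1:R) f df'.
Proof. by move=> ? <-. Qed.

Lemma isdpow f x df (a : R) : 0 < f x -> is_derive x (1:R) f df ->
  is_derive x (1:R) (fun y => powR (f y) a) (a * powR (f x) (a - 1) * df).
Proof.
move=> fx0 H.
have fd : derivable f x 1 by case: H.
have pd : derivable (@powR R ^~ a) (f x) 1.
  by apply: (@derivable_powR R 1 a (f x)); rewrite in_itv /= andbT.
have cd : derivable ((@powR R ^~ a) \o f) x 1.
  apply/derivable1_diffP; apply: differentiable_comp; exact/derivable1_diffP.
apply: DeriveDef; first exact: cd.
rewrite -derive1E.
have -> : (fun y => powR (f y) a) = ((@powR R ^~ a) \o f) by [].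
rewrite derive1_comp // powR_derive1 ?in_itv /= ?andbT //.
by rewrite derive1E derive_val.
Qed.

Lemma isd_entry m k (G : R -> 'M[R]_(m, k)) t i j : derivable G t 1 ->
  is_derive t (1:R) (fun s => G s i j) ((derive1 G t) i j).
Proof.
move=> dG; have dij : derivable (fun s => G s i j) t 1.
  exact: ((@derivable_mxP R R^o m k G t 1).1 dG i j).
apply: DeriveDef => //.
by rewrite derive1E derive_mx // mxE.
Qed.

Lemma D_dir (V : normedModType R) (f : V -> R) (a v : V) :
  'D_v f a = 'D_1 (fun h : R => f (h *: v + a)) 0.
Proof.
rewrite /derive; set g1 := fun h => h^-1 *: _; set g2 := fun h => h^-1 *: _.
suff -> : g1 = g2 by [].
by rewrite funeqE /g1 /g2 => h /=; rewrite addr0 scale0r add0r [_%:A]mulr1.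
Qed.

Lemma pair_lin (m : nat) (h : R) (W x : 'cV[R]_m * 'cV[R]_m) :
  (h *: W + x).1 = h *: W.1 + x.1 /\ (h *: W + x).2 = h *: W.2 + x.2.
Proof. by []. Qed.

End Calc.
Section Alg.
Variables (R : realType) (n : nat) (a1 a2 a3 : R).
Hypotheses (h1 : 0 < a1) (h2 : 0 < a2) (h3 : 0 < a3).
Local Notation A := (diagA n a1 a2 a3).
Local Notation B := (diagA n a1^-1 a2^-1 a3^-1).
Local Notation coord := (@Defs.coord R n).
Implicit Types x y z g p : 'cV[R]_n.

Lemma BA x : B *m (A *m x) = x.
Proof. by rewrite mulmxA diagA_mulmx !mulVf ?gt_eqF // diagA1 mul1mx. Qed.
Lemma AB x : A *m (B *m x) = x.
Proof. by rewrite mulmxA diagA_mulmx !divff ?gt_eqF // diagA1 mul1mx. Qed.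
Lemma dotA_sym x y : dot (A *m x) y = dot x (A *m y).
Proof. by rewrite dot_mulmx diagA_tr. Qed.
Lemma dotB_sym x y : dot (B *m x) y = dot x (B *m y).
Proof. by rewrite dot_mulmx diagA_tr. Qed.
Lemma dotAE x y : dot (A *m x) y = a3 * dot x y + (a1 - a3) * coord x 0 * coord y 0
   + (a2 - a3) * coord x 1 * coord y 1.
Proof. rewrite diagA_mul !dotDl !dotZl !dot_ebasis; ring. Qed.
Lemma calA_dot g : calA a1 a2 a3 g = dot g (A *m g) + a3 * (1 - dot g g).
Proof. rewrite -dotA_sym dotAE /calA; ring. Qed.

Lemma dotA_pos x : dot x x = 1 -> 0 < dot x (A *m x).
Proof.
move=> xx.
set m := Num.min a1 (Num.min a2 a3).
have m0 : 0 < m by rewrite !lt_min h1 h2 h3.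
suff : m * dot x x <= dot x (A *m x) by rewrite xx mulr1; apply: lt_le_trans.
rewrite /dot mulr_sumr; apply: ler_sum => i _; rewrite diagA_mulE.
rewrite [leRHS]mulrCA; apply: ler_wpM2r; first by rewrite -expr2 sqr_ge0.
rewrite /dg /m; case: ifP => _; first by rewrite ge_min lexx.
case: ifP => _; first by rewrite !ge_min lexx orbT.
by rewrite !ge_min lexx !orbT.
Qed.

Lemma legendreE eps g v : legendre A eps g v =
  - (eps ^+ 2)^-1 *: (dot (A *m v) g *: (A *m g) - dot (A *m g) g *: (A *m v)).
Proof. by rewrite /legendre /Iw wedge_mul. Qed.

Lemma Xg_spec eps g p : eps != 0 -> dot g g = 1 -> dot g p = 0 ->
  dot g (Xg A eps g p) = 0 /\ legendre A eps g (Xg A eps g p) = p.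
Proof.
move=> e0 gg gp; apply: (@xgetPex _ 0 [set v | dot g v = 0 /\ legendre A eps g v = p]).
set c := dot g (A *m g).
have c0 : c != 0 by rewrite gt_eqF // dotA_pos.
set t := dot g (B *m p).
exists ((eps ^+ 2 / c) *: (B *m p - t *: g)); split.
  by rewrite dotZr dotBr dotZr gg -/t mulr1 subrr mulr0.
have Av : A *m ((eps ^+ 2 / c) *: (B *m p - t *: g)) =
    (eps ^+ 2 / c) *: (p - t *: (A *m g)).
  by rewrite -scalemxAr mulmxBr -scalemxAr AB.
rewrite legendreE Av dotZl dotBl dotZl (dotC p) gp dotC -/c.
set Ag := A *m g.
apply/matrixP => i j; rewrite !mxE.
field. by apply/andP.
Qed.

End Alg.
Section Main.
Variables (R : realType) (n : nat) (a1 a2 a3 eps k12 : R).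
Hypotheses (h1 : 0 < a1) (h2 : 0 < a2) (h3 : 0 < a3) (e0 : eps != 0).
Local Notation A := (diagA n a1 a2 a3).
Local Notation B := (diagA n a1^-1 a2^-1 a3^-1).
Local Notation coord := (@Defs.coord R n).
Implicit Types x y z g p : 'cV[R]_n.

Definition bet := (2 * eps)^-1 - 1.
Definition gam := 1 - eps^-1.
Definition dC g x := (a1 - a3) * (2 * coord g 0 * coord x 0) + (a2 - a3) * (2 * coord g 1 * coord x 1).

Lemma dCE g x : dC g x = 2 * (dot (A *m g) x - a3 * dot g x).
Proof. rewrite /dC dotAE; ring. Qed.

Lemma pow_facts c : 0 < c ->
  [/\ 0 < powR c bet, powR c (bet - 1) = powR c bet / c,
      powR c gam = (powR c bet * (powR c bet * c))^-1 &
      powR c (gam - 1) = (powR c bet * (powR c bet * c))^-1 / c].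
Proof.
move=> c0; have cn : c != 0 by rewrite gt_eqF.
have E1 : forall r, powR c (r - 1) = powR c r / c.
  by move=> r; rewrite powRB ?cn ?implybT // powRr1 // ltW.
have E2 : powR c gam = (powR c bet * (powR c bet * c))^-1.
  have -> : gam = - (bet + (bet + 1)) by rewrite /gam /bet; field; rewrite e0.
  by rewrite powRN !powRD ?cn ?implybT // powRr1 // ltW.
split => //; first exact: powR_gt0.
by rewrite E1 E2.
Qed.

Lemma ham_alg G X P W1 W2 (N' dH : R) :
  Xg A eps G P = X -> dot G G = 1 -> dot G X = 0 -> legendre A eps G X = P ->
  N' = eps * (bet * powR (calA a1 a2 a3 G) (bet - 1) * dC G X) ->
  dot G W1 = 0 ->
  dot W1 (Nmult a1 a2 a3 eps G *: P) + dot G W2 = 0 ->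
  dH = 2^-1 * (powR (calA a1 a2 a3 G) gam *
          (dot W2 (B *m (Nmult a1 a2 a3 eps G *: P)) + dot (Nmult a1 a2 a3 eps G *: P) (B *m W2))
        + dot (Nmult a1 a2 a3 eps G *: P) (B *m (Nmult a1 a2 a3 eps G *: P)) *
          (gam * powR (calA a1 a2 a3 G) (gam - 1) * dC G W1)) ->
  omega_tw a1 a2 a3 eps k12 G
    ((Nmult a1 a2 a3 eps G)^-1 *: X,
     (Nmult a1 a2 a3 eps G)^-1 *: (Nmult a1 a2 a3 eps G *: pdot_red A eps k12 G P + N' *: P))
    (W1, W2) = - dH.
Proof.
move=> XE GG GX LP EN' GW1 TW EdH.
have cE : calA a1 a2 a3 G = dot G (A *m G) by rewrite calA_dot // GG subrr mulr0 addr0.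
set c := calA a1 a2 a3 G in cE EN' EdH *.
have c0 : 0 < c by rewrite cE dotA_pos.
have cn : c != 0 by rewrite gt_eqF.
have [u0 Pb Pg Pg1] := pow_facts c0.
set u := powR c bet in u0 Pb Pg Pg1.
have un : u != 0 by rewrite gt_eqF.
have NE : Nmult a1 a2 a3 eps G = eps * u by [].
rewrite NE in TW EdH *.
rewrite Pb in EN'; rewrite Pg Pg1 in EdH.
set s := dot (A *m X) G.
have sE : dot (A *m G) X = s by rewrite dotA_sym dotC.
have cE' : dot (A *m G) G = c by rewrite dotA_sym cE.
set K := dot (A *m X) X.
set Y := dot (A *m X) W1.
set Z := dot (A *m G) W1.
have PE : P = - (eps ^+ 2)^-1 *: (s *: (A *m G) - c *: (A *m X)).
  by rewrite -LP legendreE cE'.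
have GP : dot G P = 0.
  rewrite PE dotZr dotBr !dotZr -(dotC (A *m G)) -(dotC (A *m X)) cE' -/s; ring.
have PW1 : dot P W1 = - (eps ^+ 2)^-1 * (s * Z - c * Y).
  by rewrite PE dotZl dotBl !dotZl.
have PX : dot P X = - (eps ^+ 2)^-1 * (s * s - c * K).
  by rewrite PE dotZl dotBl !dotZl sE.
have dCX : dC G X = 2 * s by rewrite dCE sE GX mulr0 subr0.
have dCW : dC G W1 = 2 * Z by rewrite dCE GW1 mulr0 subr0.
rewrite dCX in EN'; rewrite dCW in EdH.
have BP : B *m P = - (eps ^+ 2)^-1 *: (s *: G - c *: X).
  by rewrite PE -scalemxAr mulmxBr -!scalemxAr !BA.
have BW : dot W2 (B *m (eps * u *: P)) = eps * u * (- (eps ^+ 2)^-1 * (s * dot W2 G - c * dot W2 X)).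
  by rewrite -scalemxAr BP dotZr dotZr dotBr !dotZr.
have BW' : dot (eps * u *: P) (B *m W2) = dot W2 (B *m (eps * u *: P)).
  by rewrite -dotB_sym dotC.
have BPP : dot (eps * u *: P) (B *m (eps * u *: P)) =
    (eps * u) ^+ 2 * (- (eps ^+ 2)^-1 * (s * dot P G - c * dot P X)).
  by rewrite -scalemxAr BP !dotZr dotZl dotBr !dotZr; ring.
rewrite BW' BW BPP (dotC P G) GP PX in EdH.
have GW2 : dot W2 G = - (eps * u) * dot P W1.
  by rewrite dotC; move: TW; rewrite dotZr dotC; move/eqP; rewrite addrC addr_eq0 => /eqP ->; ring.
rewrite GW2 PW1 in EdH.
have PdW : dot (pdot_red A eps k12 G P) W1 =
   (1 - eps) / eps ^+ 3 * (K * Z - s * Y)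
   + (eps ^+ 2)^-1 * (k12 * (coord X 1 * coord W1 0 - coord X 0 * coord W1 1)).
  rewrite /pdot_red XE !dotDl !dotZl GW1 mulr0 addr0.
  rewrite /Iw wedge_mul dotBl !dotZl sE -/K -/Y -/Z.
  rewrite /kappa -scalemxAl wedge_mul dotZl dotBl !dotZl !dot_ebasis; ring.
rewrite /omega_tw /=.
rewrite !dotZl !dotDl !dotZl PdW PW1 !coordZ EdH EN'.
rewrite -/c (_ : c `^ ((2 * eps)^-1 - 1) = u) // /bet /gam (dotC W2 X).
field.
by rewrite un cn e0.
Qed.

End Main.
Section Metric.
Variables (R : realType) (n : nat) (a1 a2 a3 eps : R).
Hypotheses (h1 : 0 < a1) (h2 : 0 < a2) (h3 : 0 < a3) (e0 : eps != 0).
Local Notation A := (diagA n a1 a2 a3).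
Local Notation B := (diagA n a1^-1 a2^-1 a3^-1).
Implicit Types x y z g p : 'cV[R]_n.

Lemma dot_eq0 x : dot x x = 0 -> x = 0.
Proof.
move=> /eqP; rewrite /dot psumr_eq0 => [/allP H|i _]; last by rewrite -expr2 sqr_ge0.
apply/matrixP => i j; rewrite ord1 mxE.
have := H i (mem_index_enum _); rewrite /= mulf_eq0 orbb => /eqP ->; done.
Qed.

Lemma metric_alg x v q : dot x x = 1 -> dot x v = 0 -> dot x q = 0 ->
  (forall w, dot x w = 0 -> dot q w = metricAe A eps x v w) ->
  hstar a1 a2 a3 eps (x, q) = 2^-1 * metricAe A eps x v v.
Proof.
move=> xx xv xq Hq.
have c0 : 0 < dot x (A *m x) by apply: dotA_pos.
set c := dot x (A *m x) in c0.
have cn : c != 0 by rewrite gt_eqF.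
set k := powR (dot x (A *m x)) (eps^-1 - 2).
have k0 : 0 < k by apply: powR_gt0.
set r := dot (A *m x) v.
set u := c *: (A *m v) - r *: (A *m x).
have cE' : dot (A *m x) x = c by rewrite dotA_sym.
have ME : forall w, metricAe A eps x v w = k * dot u w.
  by move=> w; rewrite /metricAe -/k /u dotBl !dotZl cE' -/r; ring.
have xu : dot x u = 0.
  by rewrite /u dotBr !dotZr -dotA_sym -/r (dotC x (A *m x)) cE'; ring.
have qE : q = k *: u.
  apply/eqP; rewrite -subr_eq0; apply/eqP; apply: dot_eq0.
  have xw : dot x (q - k *: u) = 0 by rewrite dotBr dotZr xq xu; ring.
  rewrite dotBl (Hq _ xw) ME dotZl dotBr dotZr.
  have -> : dot u q = dot q u by rewrite dotC.
  by rewrite (Hq _ xu) ME; ring.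
rewrite /hstar /= invmx_diagA ?gt_eqF // calA_dot // xx subrr mulr0 addr0 -/c.
rewrite ME qE -scalemxAr /u mulmxBr -!scalemxAr !BA // !dotZl !dotZr !dotBl !dotBr.
rewrite !dotZl !dotZr -/r (dotC (A *m v) x) -dotA_sym -/r cE'.
have Pg : powR c (1 - eps^-1) = (k * c)^-1.
  have -> : 1 - eps^-1 = - ((eps^-1 - 2) + 1) by ring.
  by rewrite powRN powRD ?cn ?implybT // powRr1 // ltW.
rewrite Pg; field.
by rewrite cn gt_eqF.
Qed.

End Metric.
Section Calc2.
Variables (R : realType) (n : nat) (a1 a2 a3 : R).
Local Notation coord := (@Defs.coord R n).
Implicit Types x y z g p : 'cV[R]_n.

Lemma isd_calA (F : R -> 'cV[R]_n) (x : R) (dF0 dF1 : R) :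
  is_derive x (1:R) (fun s => coord (F s) 0) dF0 ->
  is_derive x (1:R) (fun s => coord (F s) 1) dF1 ->
  is_derive x (1:R) (fun s => calA a1 a2 a3 (F s))
    ((a1 - a3) * (2 * coord (F x) 0 * dF0) + (a2 - a3) * (2 * coord (F x) 1 * dF1)).
Proof.
move=> H0 H1; rewrite /calA.
apply: isdE.
rewrite -![_ *: _]/(_ * _); ring.
Qed.

Lemma isd_coord_traj (G : R -> 'cV[R]_n) t k : (k < n)%N -> derivable G t 1 ->
  is_derive t (1:R) (fun s => coord (G s) k) (coord (derive1 G t) k).
Proof.
move=> kn dG.
have E : (fun s => coord (G s) k) = (fun s => G s (Ordinal kn) 0).
  by apply: funext => s; apply: coordE.
rewrite E (@coordE _ _ _ _ (Ordinal kn)) //; exact: isd_entry.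
Qed.

Lemma isd_coord_line (W G : 'cV[R]_n) k :
  is_derive (0:R) (1:R) (fun h : R => coord (h *: W + G) k) (coord W k).
Proof.
have E : (fun h : R => coord (h *: W + G) k) = (fun h => h * coord W k + coord G k).
  by apply: funext => h; rewrite coordD coordZ.
rewrite E; apply: isdE.
rewrite -![_ *: _]/(_ * _); ring.
Qed.

Lemma isd_quad (W2 pt : 'cV[R]_n) (M : 'M[R]_n) :
  is_derive (0:R) (1:R) (fun h : R => dot (h *: W2 + pt) (M *m (h *: W2 + pt)))
    (dot W2 (M *m pt) + dot pt (M *m W2)).
Proof.
have E : (fun h : R => dot (h *: W2 + pt) (M *m (h *: W2 + pt))) =
   (fun h => h * (h * dot W2 (M *m W2)) + h * (dot W2 (M *m pt) + dot pt (M *m W2))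
             + dot pt (M *m pt)).
  apply: funext => h; rewrite mulmxDr -scalemxAr !dotDl !dotDr !dotZl !dotZr; ring.
rewrite E; apply: isdE.
rewrite -![_ *: _]/(_ * _); ring.
Qed.

End Calc2.
Section GPdS.
Variables (R : realType) (n : nat) (A : 'M[R]_n) (eps k12 : R).

Lemma GPd (G P X : 'cV[R]_n) : Xg A eps G P = X -> dot G G = 1 ->
  dot G (pdot_red A eps k12 G P) = - dot X P.
Proof.
move=> XE GG.
rewrite /pdot_red /mu /hred XE !dotDr !dotZr GG (dotC (Iw A G X *m X) G).
rewrite /kappa -!scalemxAl !wedge_mul !dotZr !dotBr !dotZr !(dotC (ebasis R n _)).
rewrite [2 * (2^-1 * _)]mulrA divff ?pnatr_eq0 // mul1r; ring.
Qed.
End GPdS.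

Unset Implicit Arguments. Set Strict Implicit.

Theorem theorem8p2 (R : realType) (n : nat) (a b eps k12 a1 a2 a3 : R)
  (D : set R) (g p : R -> 'cV[R]_n) :
  (3 <= n)%N ->
  0 < a -> 0 < b ->
  (eps = b / (b + a) \/ (b != a /\ eps = b / (b - a))) ->
  0 < a1 -> 0 < a2 -> 0 < a3 ->
  open D ->
  (* (g, p) is a solution of the reduced system on T^*S^{n-1}, for t in D *)
  (forall t, D t ->
     TSn (g t) (p t) /\
     derivable g t 1 /\ derivable p t 1 /\
     derive1 g t = Xg (diagA n a1 a2 a3) eps (g t) (p t) /\
     derive1 p t = pdot_red (diagA n a1 a2 a3) eps k12 (g t) (p t)) ->
  let N := Nmult a1 a2 a3 eps in
  let pt := fun t => N (g t) *: p t in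
  (* with d tau = N dt (i.e. d/d tau = N^{-1} d/dt) and pt = N p, the curve
     (g, pt) is an integral curve of the Hamiltonian vector field of h^* for
     the twisted symplectic form restricted to T^*S^{n-1} *)
  (forall t, D t ->
     TSn (g t) (pt t) /\ derivable pt t 1 /\
     is_hamVF (omega_tw a1 a2 a3 eps k12 (g t)) (hstar a1 a2 a3 eps)
       (g t, pt t) ((N (g t))^-1 *: derive1 g t, (N (g t))^-1 *: derive1 pt t))
  /\
  (* h^* is the Hamiltonian of the metric ds^2_{A,eps} on S^{n-1}: for a tangent
     vector v at gamma and its Legendre image pt (w.r.t. ds^2), h^* = ds^2(v,v)/2 *)
  (forall (x v q : 'cV[R]_n),
     dot x x = 1 -> dot x v = 0 -> dot x q = 0 ->
     (forall w, dot x w = 0 -> dot q w = metricAe (diagA n a1 a2 a3) eps x v w) ->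
     hstar a1 a2 a3 eps (x, q) = 2^-1 * metricAe (diagA n a1 a2 a3) eps x v v).
Proof.
move=> hn ha hb heps h1 h2 h3 oD Hsol N pt; rewrite {}/pt {}/N.
have e0 : eps != 0.
  case: heps => [->|[ba ->]].
    by apply: mulf_neq0; rewrite ?invr_eq0 gt_eqF // addr_gt0.
  have ba' : b - a != 0 by rewrite subr_eq0.
  by apply: mulf_neq0; rewrite ?invr_eq0 // gt_eqF.
have n0 : (0 < n)%N by apply: leq_trans hn.
have n1 : (1 < n)%N by apply: leq_trans hn.
split; last first.
  by move=> x v q xx xv xq Hq; apply: metric_alg.
move=> t Dt.
have [[GG GP] [dgt [dpt [Eg Ep]]]] := Hsol t Dt.
have [GX LP] := Xg_spec h1 h2 h3 e0 GG GP.
set G := g t in GG GP Eg Ep GX LP *.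
set P := p t in GP Ep GX LP *.
set X := Xg (diagA n a1 a2 a3) eps G P in Eg Ep GX LP *.
have c0 : 0 < calA a1 a2 a3 G.
  by rewrite calA_dot GG subrr mulr0 addr0 dotA_pos.
have dC_t : is_derive t (1:R) (fun s => calA a1 a2 a3 (g s)) (dC a1 a2 a3 G X).
  apply: isdE; first apply: (isd_calA a1 a2 a3 (isd_coord_traj n0 dgt) (isd_coord_traj n1 dgt)).
  by rewrite Eg.
set N' := eps * (bet eps * powR (calA a1 a2 a3 G) (bet eps - 1) * dC a1 a2 a3 G X).
have dN : is_derive t (1:R) (fun s => Nmult a1 a2 a3 eps (g s)) N'.
  apply: isdE; first exact: (isdM (isdC t eps) (@isdpow _ (fun s => calA a1 a2 a3 (g s)) t _ ((2 * eps)^-1 - 1) c0 dC_t)).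
  by rewrite /N' /bet /=; ring.
set NG := Nmult a1 a2 a3 eps G.
have Hij : forall i j, is_derive t (1:R)
    (fun s => (Nmult a1 a2 a3 eps (g s) *: p s) i j)
    (NG * (derive1 p t) i j + P i j * N').
  move=> i j.
  have E : (fun s => (Nmult a1 a2 a3 eps (g s) *: p s) i j) =
           (fun s => Nmult a1 a2 a3 eps (g s) * p s i j).
    by apply: funext => s; rewrite mxE.
  rewrite E; exact: (isdM dN (isd_entry i j dpt)).
have dptd : derivable (fun s => Nmult a1 a2 a3 eps (g s) *: p s) t 1.
  by apply/derivable_mxP => i j; case: (Hij i j).
have Ept : derive1 (fun s => Nmult a1 a2 a3 eps (g s) *: p s) t =
    NG *: pdot_red (diagA n a1 a2 a3) eps k12 G P + N' *: P.
  rewrite derive1E derive_mx //; apply/matrixP => i j; rewrite mxE.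
  case: (Hij i j) => _ ->; rewrite Ep [RHS]mxE [X in _ = X + _]mxE [X in _ = _ + X]mxE; ring.
have NGn : NG != 0 by rewrite mulf_neq0 // gt_eqF // powR_gt0.
split.
  by split => //; rewrite dotZr GP mulr0.
split => //.
rewrite Ept Eg -/NG.
split.
  split => /=; first by rewrite dotZr GX mulr0.
  rewrite !dotZl !dotZr dotDr !dotZr (@GPd _ _ _ _ k12 G P X (erefl _) GG) GP; ring.
move=> [W1 W2] [/= TW1 TW2].
apply: (ham_alg k12 h1 h2 h3 e0 (erefl _) GG GX LP (erefl _) TW1 TW2).
rewrite D_dir.
set pt0 := NG *: P.
have E : (fun h : R => hstar a1 a2 a3 eps (h *: (W1, W2) + (G, pt0))) =
   (fun h => (fun _ => 2^-1) h * powR (calA a1 a2 a3 (h *: W1 + G)) (1 - eps^-1) *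
     dot (h *: W2 + pt0) (diagA n a1^-1 a2^-1 a3^-1 *m (h *: W2 + pt0))).
  by apply: funext => h; rewrite /hstar invmx_diagA ?gt_eqF.
rewrite E.
have Hc : is_derive (0:R) (1:R) (fun h : R => calA a1 a2 a3 (h *: W1 + G)) (dC a1 a2 a3 G W1).
  apply: isdE; first exact: (isd_calA a1 a2 a3 (isd_coord_line W1 G 0) (isd_coord_line W1 G 1)).
  by rewrite /= scale0r add0r.
have c0' : 0 < calA a1 a2 a3 (0 *: W1 + G) by rewrite scale0r add0r.
have Hall := isdM (isdM (isdC 0 2^-1) (@isdpow _ (fun h : R => calA a1 a2 a3 (h *: W1 + G)) 0 _ (1 - eps^-1) c0' Hc))
                  (isd_quad W2 pt0 (diagA n a1^-1 a2^-1 a3^-1)).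
case: Hall => _ ->.
rewrite /= !scale0r !add0r /gam.
ring.
Qed.
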